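(* Let $n\geq7$ and let $\mathcal R(P_{n-5})=u_1,\ldots,u_p$. If $u_iu_k>_{\mathcal R}u_ju_l$ in $F(J(P_{n-5})^2)$ for some indices $i,j,k,l$, then $x_nx_{n-1}x_{n-2}^2x_{n-4}^2u_iu_k>_{\mathcal R}x_nx_{n-1}x_{n-2}^2x_{n-4}^2u_ju_l$ in $F(J(P_n)^2)$.
   Context: For $m\geq 1$, $P_m$ is the path graph on vertices $x_1,\ldots,x_m$ with edges $\{x_i,x_{i+1}\}$; $J(P_m)$ is its cover ideal (generated by $\prod_{x\in C}x$, $C$ a minimal vertex cover); $G(I)$ denotes minimal monomial generators and $F(I^2)=\{ab:a,b\in G(I)\}$. The rooted list $\mathcal R(P_m)$: $\mathcal R(P_1)$ empty; $\mathcal R(P_2)=x_1,x_2$; $\mathcal R(P_3)=x_2,x_1x_3$; $\mathcal R(P_4)=x_1x_3,x_2x_3,x_2x_4$; for $m\geq5$, if $\mathcal R(P_{m-2})=u_1,\ldots,u_r$ and $\mathcal R(P_{m-3})=v_1,\ldots,v_s$, then $\mathcal R(P_m)=x_{m-1}u_1,\ldots,x_{m-1}u_r,x_mx_{m-2}v_1,\ldots,x_mx_{m-2}v_s$; it lists each element of $G(J(P_m))$ once. With $\mathcal R(P_m)=u_1,\ldots,u_q$, each $M\in F(J(P_m)^2)$ is $u_1^{a_1}\cdots u_q^{a_q}$ with $a_i\geq0$, $\sum a_i=2$; its maximal expression is the one with lexicographically largest exponent vector, and $M>_{\mathcal R}N$ on $F(J(P_m)^2)$ iff the maximal-expression exponent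 vector of $M$ is lexicographically larger than that of $N$. *)

(* Defs.v *)
From mathcomp Require Import all_boot.
Set Implicit Arguments. Unset Strict Implicit. Unset Printing Implicit Defensive.

(* Monomials in the variables x_1, x_2, ... : exponent functions nat -> nat
   (x_v has exponent [M v]; index 0 is unused). *)
Definition mono := nat -> nat.
Definition mone : mono := fun _ => 0.
Definition xv (i : nat) : mono := fun v => if v == i then 1 else 0.
Definition mmul (f g : mono) : mono := fun v => f v + g v.
Definition meq (f g : mono) : Prop := forall v, f v = g v.

Fixpoint Rlist (m : nat) : seq mono :=
  match m with
  | 0 => [::]
  | 1 => [::]
  | 2 => [:: xv 1; xv 2]
  | 3 => [:: xv 2; mmul (xv 1) (xv 3)]
  | 4 => [:: mmul (xv 1) (xv 3); mmul (xv 2) (xv 3); mmul (xv 2) (xv 4)]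
  | S (S ((S ((S (S _)) as m2)) as m3)) =>
      [seq mmul (xv m.-1) u | u <- Rlist m3]
        ++ [seq mmul (mmul (xv m) (xv m.-2)) v | v <- Rlist m2]
  end.

Definition expr_of (us : seq mono) (a : seq nat) : mono :=
  fun v => sumn [seq p.1 * p.2 v | p <- zip a us].

Definition is_expr (us : seq mono) (M : mono) (a : seq nat) : Prop :=
  size a = size us /\ sumn a = 2 /\ meq (expr_of us a) M.

Fixpoint lexgt (a b : seq nat) : bool :=
  match a, b with
  | x :: a', y :: b' => (y < x) || ((x == y) && lexgt a' b')
  | _, _ => false
  end.

Definition is_max_expr (us : seq mono) (M : mono) (a : seq nat) : Prop :=
  is_expr us M a /\ forall b, is_expr us M b -> b = a \/ lexgt a b.

(* M >_R N in F(J(P_m)^2): both lie in F(J(P_m)^2) (i.e. have an expression)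
   and the maximal expression of M is lex-larger than that of N. *)
Definition Rgt (m : nat) (M N : mono) : Prop :=
  exists a b, is_max_expr (Rlist m) M a /\ is_max_expr (Rlist m) N b /\ lexgt a b.

(* Main.v *)
Require Import Defs.
From mathcomp Require Import all_boot zify.

Definition E (S p q : nat) : seq nat := mkseq (fun t => nat_of_bool (t == p) + nat_of_bool (t == q)) S.

Lemma lexgt_irr a : ~~ lexgt a a.
Proof. by elim: a => //= x a IH; rewrite ltnn eqxx /=. Qed.

Lemma lexgt_asym a b : lexgt a b -> ~~ lexgt b a.
Proof.
elim: a b => [|x a IH] [|y b] //=.
case/orP => [lt|/andP[/eqP-> h]].
  by rewrite ltnNge (ltnW lt) /= eq_sym (gtn_eqF lt).
by rewrite ltnn eqxx /= IH.
Qed.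

Lemma lexgt_nth a b r : size a = size b -> r < size a ->
  (forall t, t < r -> nth 0 a t = nth 0 b t) -> nth 0 b r < nth 0 a r -> lexgt a b.
Proof.
elim: a b r => [|x a IH] [|y b] r //= [sz] lt h hr.
case: r lt h hr => [|r] lt h hr /=; first by rewrite hr.
have -> : x = y by exact: (h 0).
rewrite ltnn eqxx /=; apply: (IH _ r) => // t tr; exact: (h t.+1).
Qed.

Lemma nthE S p q t : t < S -> nth 0 (E S p q) t = (t == p) + (t == q).
Proof. by move=> h; rewrite nth_mkseq. Qed.

Lemma lexE S p q p' q' : p <= q -> p' <= q' -> q < S -> q' < S ->
  (p < p' \/ (p = p' /\ q < q')) -> lexgt (E S p q) (E S p' q').
Proof.
move=> pq pq' qS qS' [lt|[eq lt]].
- apply: (@lexgt_nth (E S p q) (E S p' q') p); rewrite ?size_mkseq //; try lia.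
  + by move=> t tp; rewrite !nthE; lia.
  + rewrite !nthE; lia.
- subst p'; apply: (@lexgt_nth (E S p q) (E S p q') q); rewrite ?size_mkseq //; try lia.
  + by move=> t tp; rewrite !nthE; lia.
  + rewrite !nthE; lia.
Qed.

Lemma lex_le S p q p' q' : p <= q -> p' <= q' -> q < S -> q' < S ->
  (E S p q = E S p' q' \/ lexgt (E S p q) (E S p' q')) ->
  p < p' \/ (p = p' /\ q <= q').
Proof.
move=> pq pq' qS qS' H.
have [lt|ge] := ltnP p p'; first by left.
have [eq|ne] := eqVneq p p'.
  subst p'; have [le|lt] := leqP q q'; first by right.
  have h := @lexE S p q' p q pq' pq qS' qS (or_intror (conj erefl lt)).
  case: H => [e|h']; first by rewrite e (negPf (lexgt_irr _)) in h.
  by rewrite (negPf (lexgt_asym _ _ h')) in h.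
have lt : p' < p by lia.
have h := @lexE S p' q' p q pq' pq qS' qS (or_introl lt).
case: H => [e|h']; first by rewrite e (negPf (lexgt_irr _)) in h.
by rewrite (negPf (lexgt_asym _ _ h')) in h.
Qed.

Lemma lex_lt S p q p' q' : p <= q -> p' <= q' -> q < S -> q' < S ->
  lexgt (E S p q) (E S p' q') -> p < p' \/ (p = p' /\ q < q').
Proof.
move=> pq pq' qS qS' H.
case: (@lex_le S p q p' q' pq pq' qS qS' (or_intror H)) => [|[e le]]; first by left.
subst p'; right; split => //; rewrite ltn_neqAle le andbT.
apply/eqP => e; subst q'; by rewrite (negPf (lexgt_irr _)) in H.
Qed.


Lemma sum0 a : sumn a = 0 -> forall t, nth 0 a t = 0.
Proof.
elim: a => [|x a IH] /= h t; first by rewrite nth_nil.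
case: t => [|t] /=; lia || (apply: IH; lia).
Qed.

Lemma sum1 a : sumn a = 1 -> exists2 p, p < size a & forall t, nth 0 a t = (t == p).
Proof.
elim: a => [|x a IH] //= h.
case: x h => [|[|x]] h //=.
- have [p pl hp] := IH h; exists p.+1 => //; by case.
- exists 0 => // -[|t] //=; rewrite (@sum0 a) //; lia.
Qed.

Lemma sum2 a : sumn a = 2 -> exists p q, [/\ p <= q, q < size a &
   forall t, nth 0 a t = (t == p) + (t == q)].
Proof.
elim: a => [|x a IH] //= h.
case: x h => [|[|[|x]]] h //=.
- have [p [q [pq ql hp]]] := IH h; exists p.+1, q.+1; split => //; by case.
- have [q ql hq] := @sum1 a ltac:(lia); exists 0, q.+1; split => //.
  by case => [|t] //=; rewrite hq.
- exists 0, 0; split => // -[|t] //=; rewrite (@sum0 a) //; lia.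
Qed.

Lemma sum2E a : sumn a = 2 -> exists p q, [/\ p <= q, q < size a & a = E (size a) p q].
Proof.
move/sum2 => [p [q [pq ql h]]]; exists p, q; split => //.
apply: (@eq_from_nth _ 0); rewrite ?size_mkseq // => t tl; by rewrite nthE.
Qed.

Lemma sum_pick S p (g : nat -> nat) :
  \sum_(0 <= t < S) (t == p) * g t = if p < S then g p else 0.
Proof.
elim: S => [|S IH]; first by rewrite big_geq.
rewrite big_nat_recr //= IH.
case: (ltngtP p S) => h.
- by rewrite (ltn_trans h (ltnSn S)) addn0.
- by rewrite ltnS leqNgt h.
- by subst; rewrite ltnSn mul1n.
Qed.

Lemma expr_sum us a v : size a = size us ->
  expr_of us a v = \sum_(0 <= t < size us) nth 0 a t * nth mone us t v.
Proof.
elim: us a => [|u us IH] [|x a] //=; first by rewrite big_geq. move=> [sz].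
rewrite big_nat_recl //= -IH //.

Qed.

Lemma exprE us p q v : p < size us -> q < size us ->
  expr_of us (E (size us) p q) v = nth mone us p v + nth mone us q v.
Proof.
move=> hp hq; rewrite expr_sum ?size_mkseq //.
rewrite (eq_big_nat _ _ (F2 := fun t => (t == p) * nth mone us t v + (t == q) * nth mone us t v)).
  by rewrite big_split /= !sum_pick hp hq.
move=> t /andP[_ ht]; rewrite nthE //; lia.
Qed.

Lemma sumnE2 S p q : p < S -> q < S -> sumn (E S p q) = 2.
Proof.
move=> hp hq.
rewrite sumnE /E /mkseq big_map.
have -> : \sum_(j <- iota 0 S) ((j == p) + (j == q)) =
   \sum_(0 <= j < S) ((j == p) * 1 + (j == q) * 1).
  by rewrite /index_iota subn0; apply: eq_bigr => t _; rewrite !muln1.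
by rewrite big_split /= !sum_pick hp hq.
Qed.


Lemma nth_mapm (f : mono -> mono) s t :
  nth mone (map f s) t = if t < size s then f (nth mone s t) else mone.
Proof.
case: ltnP => h; first exact: nth_map.
by rewrite nth_default // size_map.
Qed.

Lemma RlistS k : Rlist k.+4.+1 =
  [seq mmul (xv k.+4) u | u <- Rlist k.+3] ++
  [seq mmul (mmul (xv k.+4.+1) (xv k.+3)) v | v <- Rlist k.+2].
Proof. reflexivity. Qed.

Lemma RlistE k : Rlist k.+4.+3 =
  [seq mmul (xv k.+4.+2) u | u <- [seq mmul (xv k.+4) u | u <- Rlist k.+3] ++
     [seq mmul (mmul (xv k.+4.+1) (xv k.+3)) v | v <- Rlist k.+2]] ++
  [seq mmul (mmul (xv k.+4.+3) (xv k.+4.+1)) v | v <- Rlist k.+4].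
Proof. reflexivity. Qed.

Lemma Rsupp m t v : m < v -> nth mone (Rlist m) t v = 0.
Proof.
elim/ltn_ind: m t => m IH t hv.
case: m IH hv => [|[|[|[|[|k]]]]] IH hv.
- by rewrite nth_nil.
- by rewrite nth_nil.
- case: t => [|[|t]] /=; rewrite ?nth_nil // /xv; case: eqP => //; lia.
- case: t => [|[|t]] /=; rewrite ?nth_nil // /mmul /xv;
    repeat (case: eqP => ? //=); lia.
- case: t => [|[|[|t]]] /=; rewrite ?nth_nil // /mmul /xv;
    repeat (case: eqP => ? //=); lia.
- rewrite RlistS nth_cat size_map.
  case: ifP => h.
  + rewrite nth_mapm h /mmul IH //; try lia. rewrite /xv; case: eqP => //; lia.
  + rewrite nth_mapm; case: ifP => h2 //.
    rewrite /mmul IH //; try lia. rewrite /xv; case: eqP => ?; case: eqP => ? //; lia.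
Qed.

Lemma R4facts k : [/\ size (Rlist k.+2) <= size (Rlist k.+4),
  forall t v, t < size (Rlist k.+2) ->
     nth mone (Rlist k.+4) t v = xv k.+3 v + nth mone (Rlist k.+2) t v &
  forall t, size (Rlist k.+2) <= t < size (Rlist k.+4) ->
     1 <= nth mone (Rlist k.+4) t k.+4].
Proof.
case: k => [|k].
- split => //=.
  + by move=> [|[|t]] v //= _; rewrite /mmul addnC.
  + by move=> [|[|[|t]]] //= _; rewrite /mmul /xv.
- rewrite RlistS size_cat !size_map; split.
  + lia.
  + move=> t v ht; by rewrite nth_cat size_map ht nth_mapm ht.
  + move=> t /andP[h1 h2]; rewrite nth_cat size_map. have -> : t < size (Rlist k.+3) = false by lia. rewrite nth_mapm.
    have -> : t - size (Rlist k.+3) < size (Rlist k.+2) by lia.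
    by rewrite /mmul /xv eqxx.
Qed.

Section L.
Variable k : nat.
Local Notation L := (Rlist k.+4.+3).
Local Notation U := (Rlist k.+2).
Local Notation al := (size (Rlist k.+3)).
Local Notation s := (size (Rlist k.+2)).

Lemma sizeL : size L = al + s + size (Rlist k.+4).
Proof. by rewrite RlistE !(size_cat, size_map). Qed.

Lemma LA t : t < al -> 1 <= nth mone L t k.+4.
Proof.
move=> h; rewrite RlistE nth_cat !(size_cat, size_map).
have -> : t < al + s by lia.
rewrite nth_mapm !(size_cat, size_map).
have -> : t < al + s by lia.
by rewrite nth_cat size_map h nth_mapm h /mmul /xv eqxx; lia.
Qed.

Lemma LB b v : b < s -> nth mone L (al + b) v =
   xv k.+4.+2 v + (xv k.+4.+1 v + xv k.+3 v + nth mone U b v).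
Proof.
move=> h; rewrite RlistE nth_cat !(size_cat, size_map).
have -> : al + b < al + s by lia.
rewrite nth_mapm !(size_cat, size_map).
have -> : al + b < al + s by lia.
rewrite nth_cat size_map ltnNge leq_addr /= nth_mapm addKn h.
by rewrite /mmul.
Qed.

Lemma LC c v : c < s -> nth mone L (al + s + c) v =
   xv k.+4.+3 v + xv k.+4.+1 v + (xv k.+3 v + nth mone U c v).
Proof.
move=> h; have [h1 h2 h3] := R4facts k.
rewrite RlistE nth_cat !(size_cat, size_map) ltnNge leq_addr /= addKn.
rewrite nth_mapm; have -> : c < size (Rlist k.+4) by lia.
by rewrite /mmul h2.
Qed.

Lemma LD t : al + s + s <= t < size L -> 1 <= nth mone L t k.+4.
Proof.
rewrite sizeL => /andP[t1 t2]; have [h1 h2 h3] := R4facts k.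
rewrite RlistE nth_cat !(size_cat, size_map).
have -> : t < al + s = false by lia.
rewrite nth_mapm.
have -> : t - (al + s) < size (Rlist k.+4) by lia.
rewrite /mmul; have := h3 (t - (al + s)); lia.
Qed.
End L.


Lemma xvE i v : xv i v = (v == i).
Proof. by []. Qed.

Lemma charU us N a : is_expr us N a -> exists p q, [/\ p <= q, q < size us,
  a = E (size us) p q & forall v, nth mone us p v + nth mone us q v = N v].
Proof.
move=> [sz [s2 me]]; have [p [q [pq ql ea]]] := @sum2E a s2.
exists p, q; split; rewrite -?sz //.
move=> v; rewrite -(me v) ea sz exprE // -sz; lia.
Qed.

Lemma charU_inv us N p q : p < size us -> q < size us ->
  (forall v, nth mone us p v + nth mone us q v = N v) -> is_expr us N (E (size us) p q).
Proof.
move=> hp hq h; split; first by rewrite size_mkseq.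
split; first exact: (@sumnE2 _ _ _ hp hq).
by move=> v; rewrite exprE.
Qed.

Section Main.
Variable k : nat.
Local Notation L := (Rlist k.+4.+3).
Local Notation U := (Rlist k.+2).
Local Notation al := (size (Rlist k.+3)).
Local Notation s := (size (Rlist k.+2)).

Definition W v := xv k.+4.+3 v + xv k.+4.+2 v + 2 * xv k.+4.+1 v + 2 * xv k.+3 v.

Lemma charL N M a : (forall v, k.+2 < v -> N v = 0) ->
  (forall v, M v = W v + N v) -> is_expr L M a ->
  exists b c, [/\ b < s, c < s, a = E (size L) (al + b) (al + s + c) &
     forall v, nth mone U b v + nth mone U c v = N v].
Proof.
move=> hN hM /charU [p [q [pq ql ea me]]].
have [h1 h2 h3] := R4facts k.
have sL := sizeL k.
have e4 := me k.+4; rewrite hM hN // /W !xvE in e4.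
have pa : al <= p.
  rewrite leqNgt; apply/negP => /(@LA k); lia.
have qa : al <= q by lia.
have qd : q < al + s + s.
  rewrite ltnNge; apply/negP => h; have := @LD k q; rewrite h ql => /(_ isT); lia.
have pd : p < al + s + s by lia.
have [ps|ps] := ltnP p (al + s).
- have [qs|qs] := ltnP q (al + s).
  + have e7 := me k.+4.+3; rewrite hM (hN k.+4.+3 ltac:(lia)) /W !xvE in e7.
    have := @LB k (p - al) k.+4.+3; rewrite subnKC //; move/(_ ltac:(lia)) => ep.
    have := @LB k (q - al) k.+4.+3; rewrite subnKC //; move/(_ ltac:(lia)) => eq.
    rewrite ep eq !xvE !Rsupp in e7; lia.
  + exists (p - al), (q - al - s); split; try lia.
    * by rewrite ea; congr E; lia.
    * move=> v; have := me v; rewrite hM /W.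
      have := @LB k (p - al) v; rewrite subnKC //; move/(_ ltac:(lia)) => ep.
      have := @LC k (q - al - s) v.
      have -> : al + s + (q - al - s) = q by lia.
      move/(_ ltac:(lia)) => eq.
      rewrite ep eq; lia.
- have qs : al + s <= q by lia.
  have e6 := me k.+4.+2; rewrite hM (hN k.+4.+2 ltac:(lia)) /W !xvE in e6.
  have := @LC k (p - al - s) k.+4.+2.
  have -> : al + s + (p - al - s) = p by lia.
  move/(_ ltac:(lia)) => ep.
  have := @LC k (q - al - s) k.+4.+2.
  have -> : al + s + (q - al - s) = q by lia.
  move/(_ ltac:(lia)) => eq.
  rewrite ep eq !xvE !Rsupp in e6; lia.
Qed.

Lemma charL_inv N M b c : b < s -> c < s ->
  (forall v, M v = W v + N v) ->
  (forall v, nth mone U b v + nth mone U c v = N v) ->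
  is_expr L M (E (size L) (al + b) (al + s + c)).
Proof.
move=> hb hc hM hU.
have [h1 h2 h3] := R4facts k; have sL := sizeL k.
apply: charU_inv; try lia.
move=> v; rewrite LB // LC // hM -hU /W; lia.
Qed.
End Main.


Lemma maxidx us N p1 q1 : p1 <= q1 -> q1 < size us ->
  is_max_expr us N (E (size us) p1 q1) ->
  forall b c, b < size us -> c < size us ->
  (forall v, nth mone us b v + nth mone us c v = N v) ->
  p1 < b \/ (p1 = b /\ q1 <= c).
Proof.
move=> pq ql [_ mx] b c hb hc hU.
have key : forall b c, b <= c -> c < size us ->
   (forall v, nth mone us b v + nth mone us c v = N v) -> p1 < b \/ (p1 = b /\ q1 <= c).
  move=> b' c' bc cl h.
  apply: (@lex_le (size us) p1 q1 b' c') => //.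
  have := mx _ (@charU_inv us N b' c' (leq_ltn_trans bc cl) cl h).
  by case=> [->|]; [left|right].
have [bc|cb] := leqP b c; first exact: key.
have := key c b (ltnW cb) hb (fun v => etrans (addnC _ _) (hU v)); lia.
Qed.

Lemma Lmax k N M p1 q1 : (forall v, k.+2 < v -> N v = 0) ->
  (forall v, M v = W k v + N v) -> p1 <= q1 -> q1 < size (Rlist k.+2) ->
  is_max_expr (Rlist k.+2) N (E (size (Rlist k.+2)) p1 q1) ->
  is_max_expr (Rlist k.+4.+3) M
     (E (size (Rlist k.+4.+3)) (size (Rlist k.+3) + p1)
        (size (Rlist k.+3) + size (Rlist k.+2) + q1)).
Proof.
move=> hN hM pq ql mx.
have [h1 h2 h3] := R4facts k; have sL := sizeL k.
have [_ [_ hU]] := mx.1.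
have hU' : forall v, nth mone (Rlist k.+2) p1 v + nth mone (Rlist k.+2) q1 v = N v.
  by move=> v; rewrite -(hU v) exprE //; lia.
split; first by apply: charL_inv; try lia.
move=> b' /(@charL k N M b' hN hM) [b [c [hb hc -> hbc]]].
have := @maxidx _ _ _ _ pq ql mx b c hb hc hbc.
case=> [lt|[eb le]].
- right; apply: lexE; lia.
- have [ec|nc] := eqVneq q1 c; first by left; subst.
  right; apply: lexE; lia.
Qed.


Theorem lemma3p16 (n : nat) (hn : 7 <= n) (i j k l : nat)
  (hi : i < size (Rlist (n - 5))) (hj : j < size (Rlist (n - 5)))
  (hk : k < size (Rlist (n - 5))) (hl : l < size (Rlist (n - 5))) :
  Rgt (n - 5)
      (mmul (nth mone (Rlist (n - 5)) i) (nth mone (Rlist (n - 5)) k))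
      (mmul (nth mone (Rlist (n - 5)) j) (nth mone (Rlist (n - 5)) l)) ->
  Rgt n
      (mmul (fun v => xv n v + xv (n - 1) v + 2 * xv (n - 2) v + 2 * xv (n - 4) v)
            (mmul (nth mone (Rlist (n - 5)) i) (nth mone (Rlist (n - 5)) k)))
      (mmul (fun v => xv n v + xv (n - 1) v + 2 * xv (n - 2) v + 2 * xv (n - 4) v)
            (mmul (nth mone (Rlist (n - 5)) j) (nth mone (Rlist (n - 5)) l))).
Proof.
have [kk ek] : exists kk, n = kk.+4.+3 by exists (n - 7); lia.
subst n.
have e5 : kk.+4.+3 - 5 = kk.+2 by lia.
have e1 : kk.+4.+3 - 1 = kk.+4.+2 by lia.
have e2 : kk.+4.+3 - 2 = kk.+4.+1 by lia.
have e4 : kk.+4.+3 - 4 = kk.+3 by lia.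
rewrite e5 e1 e2 e4 in hi hj hk hl *.
move=> [c1 [c2 [mx1 [mx2 lt12]]]].
have [p1 [q1 [pq1 ql1 ec1 hU1]]] := @charU _ _ _ mx1.1.
have [p2 [q2 [pq2 ql2 ec2 hU2]]] := @charU _ _ _ mx2.1.
subst c1 c2.
have supp : forall a b v, kk.+2 < v ->
   mmul (nth mone (Rlist kk.+2) a) (nth mone (Rlist kk.+2) b) v = 0.
  by move=> a b v hv; rewrite /mmul !Rsupp.
have := @lex_lt _ _ _ _ _ pq1 pq2 ql1 ql2 lt12 => hlt.
have [h1 h2 h3] := R4facts kk; have sL := sizeL kk.
eexists; eexists; split; last split.
- apply: (@Lmax kk _ _ p1 q1 (supp i k)) => //.
- apply: (@Lmax kk _ _ p2 q2 (supp j l)) => //.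
- apply: lexE; lia.
Qed.
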